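(* Let $R=\bigoplus_{s\in S}R_s$ be an epsilon-strongly graded $S$-graded ring inducing $S$. Then $R$ is graded von Neumann regular if and only if $R_e$ is a von Neumann regular ring for every idempotent $e\in S$.
   Context: Rings are associative, not necessarily unital. $S$-graded ring inducing $S$: $S$ a partial groupoid, $R=\bigoplus_{s\in S}R_s$, $R_sR_t\subseteq R_{st}$ when $st$ defined, $R_sR_t\ne0$ implies $st$ defined. Convention: $0\in S$, $R_0=0$, $S\setminus\{0\}=\{s:R_s\ne0\}$, undefined products set to $0$, $0$ absorbing. $H_R=\bigcup_sR_s$. $S$ cancellative: $0\ne su=tu$ or $0\ne us=ut$ implies $s=t$. (LRI): for every $s\in S$ there exist $s^{-1}\in S$ and idempotents $e,f$ with $es=sf=s$, $fs^{-1}=s^{-1}e=s^{-1}$, $ss^{-1}=e$, $s^{-1}s=f$. $R_sR_t$ denotes the additive subgroup generated by products. $R$ is epsilon-strongly graded if $S$ is cancellative, satisfies (LRI), and for every $s\in S$ there exists $\epsilon(s)\in R_sR_{s^{-1}}$ such that $\epsilon(s)x=x=x\epsilon(s^{-1})$ for every $x\in R_s$. $R$ is graded von Neumann regular if $x\in xRx$ for all $x\in H_R$. *)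

(* Defs.v *)
From HB Require Import structures.
From mathcomp Require Import all_boot all_order all_algebra.
Set Implicit Arguments. Unset Strict Implicit. Unset Printing Implicit Defensive.
Import GRing.Theory.
Local Open Scope ring_scope.

Definition nu_ring (R : zmodType) (mul : R -> R -> R) : Prop :=
  associative mul /\ left_distributive mul +%R /\ right_distributive mul +%R.

(* The partial groupoid S is encoded with an adjoined absorbing zero [z]:
   op s t = z means "st undefined" (for s, t <> z). *)

(* R_s R_t : the additive subgroup generated by products a b, a in A, b in B
   (= finite sums of such products, since A is closed under negation). *)
Definition prod_span (R : zmodType) (mul : R -> R -> R)
    (A B : R -> Prop) (x : R) : Prop :=
  exists l : seq (R * R),
    (forall p, p \in l -> A p.1 /\ B p.2) /\
    x = \sum_(p <- l) mul p.1 p.2.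

Definition add_subgroup (R : zmodType) (A : R -> Prop) : Prop :=
  A 0 /\ (forall x y, A x -> A y -> A (x + y)) /\ (forall x, A x -> A (- x)).

(* R = \bigoplus_{s in S} R_s is an S-graded ring inducing S
   (with the conventions 0 in S, R_0 = 0, S \ {0} = {s | R_s <> 0},
   undefined products = 0, 0 absorbing). *)
Definition graded_inducing (R : zmodType) (mul : R -> R -> R)
    (S : eqType) (op : S -> S -> S) (z : S) (comp : S -> R -> Prop) : Prop :=
  [/\ nu_ring mul /\ (forall s, add_subgroup (comp s)),
      (forall x : R, exists l : seq (S * R),
          uniq (map fst l) /\ (forall p, p \in l -> comp p.1 p.2) /\
          x = \sum_(p <- l) p.2),
      (forall l : seq (S * R),
          uniq (map fst l) -> (forall p, p \in l -> comp p.1 p.2) ->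
          \sum_(p <- l) p.2 = 0 -> forall p, p \in l -> p.2 = 0),
      (forall x, comp z x -> x = 0) /\
      (forall s, s <> z -> exists x, comp s x /\ x <> 0)
    & ((forall s, op z s = z /\ op s z = z) /\
          (* R_s R_t subset R_{st}; in particular R_s R_t <> 0 forces st <> 0,
             i.e. st defined, because R_z = 0 *)
          (forall s t x y, comp s x -> comp t y -> comp (op s t) (mul x y)))].

Definition cancellative (S : Type) (op : S -> S -> S) (z : S) : Prop :=
  forall s t u, (op s u <> z -> op s u = op t u -> s = t) /\
                (op u s <> z -> op u s = op u t -> s = t).

Definition idem (S : Type) (op : S -> S -> S) (e : S) : Prop := op e e = e.

Definition lri_inv (S : Type) (op : S -> S -> S) (s s' : S) : Prop :=
  exists e f, [/\ idem op e, idem op f, op e s = s, op s f = s &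
                  [/\ op f s' = s', op s' e = s', op s s' = e & op s' s = f]].

Definition LRI (S : Type) (op : S -> S -> S) : Prop :=
  forall s, exists s', lri_inv op s s'.

(* epsilon-strongly graded.  (In a cancellative (LRI) partial groupoid the
   inverse s^{-1} is unique, so quantifying over all inverses s' agrees with
   the paper's definition.) *)
Definition eps_strongly_graded (R : zmodType) (mul : R -> R -> R)
    (S : eqType) (op : S -> S -> S) (z : S) (comp : S -> R -> Prop) : Prop :=
  [/\ cancellative op z, LRI op &
      exists eps : S -> R, forall s s', lri_inv op s s' ->
        prod_span mul (comp s) (comp s') (eps s) /\
        (forall x, comp s x -> mul (eps s) x = x /\ mul x (eps s') = x)].

Definition graded_vNr (R : zmodType) (mul : R -> R -> R)
    (S : Type) (comp : S -> R -> Prop) : Prop :=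
  forall s x, comp s x -> exists y : R, x = mul (mul x y) x.

Definition vNr_subring (R : zmodType) (mul : R -> R -> R) (A : R -> Prop) : Prop :=
  forall x, A x -> exists y, A y /\ x = mul (mul x y) x.

(* Main.v *)
Require Import Defs.
From mathcomp Require Import all_boot all_order all_algebra.
Import GRing.Theory.
Local Open Scope ring_scope.

Section Aux.
Variables (R : zmodType) (mul : R -> R -> R).
Hypothesis Hr : nu_ring mul.

Lemma mul0l' a : mul 0 a = 0.
Proof.
case: Hr => _ [Hl _]; apply: (addrI (mul 0 a)); by rewrite addr0 -Hl addr0.
Qed.

Lemma mul0r' a : mul a 0 = 0.
Proof.
case: Hr => _ [_ Hd]; apply: (addrI (mul a 0)); by rewrite addr0 -Hd addr0.
Qed.

Lemma mulNl' a b : mul (- a) b = - mul a b.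
Proof.
case: Hr => _ [Hl _]; apply: (addrI (mul a b)); by rewrite -Hl !subrr mul0l'.
Qed.

Lemma mulNr' a b : mul a (- b) = - mul a b.
Proof.
case: Hr => _ [_ Hd]; apply: (addrI (mul a b)); by rewrite -Hd !subrr mul0r'.
Qed.

Lemma mulBl' a b c : mul (a - b) c = mul a c - mul b c.
Proof. case: Hr => _ [Hl _]; by rewrite Hl mulNl'. Qed.

Lemma mulBr' a b c : mul c (a - b) = mul c a - mul c b.
Proof. case: Hr => _ [_ Hd]; by rewrite Hd mulNr'. Qed.

Lemma mul_suml' I (r : seq I) (P : pred I) (F : I -> R) a :
  mul (\sum_(i <- r | P i) F i) a = \sum_(i <- r | P i) mul (F i) a.
Proof.
case: Hr => _ [Hl _].
apply: (big_morph (fun v => mul v a)) => [u v|]; [exact: Hl | exact: mul0l'].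
Qed.

Lemma mul_sumr' I (r : seq I) (P : pred I) (F : I -> R) a :
  mul a (\sum_(i <- r | P i) F i) = \sum_(i <- r | P i) mul a (F i).
Proof.
case: Hr => _ [_ Hd].
apply: (big_morph (fun v => mul a v)) => [u v|]; [exact: Hd | exact: mul0r'].
Qed.
End Aux.

Lemma comp_sum (R : zmodType) (A : R -> Prop) (HA : add_subgroup A)
  (I : eqType) (r : seq I) (P : pred I) (F : I -> R) :
  (forall i, i \in r -> P i -> A (F i)) -> A (\sum_(i <- r | P i) F i).
Proof.
move=> H; rewrite big_seq_cond; apply: (big_ind A).
- exact: HA.1.
- exact: HA.2.1.
- by move=> i /andP[]; exact: H.
Qed.

Lemma gen_direct (R : zmodType) (S : eqType) (comp : S -> R -> Prop)
  (Hsub : forall s, add_subgroup (comp s))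
  (Hdir : forall l : seq (S * R),
          uniq (map fst l) -> (forall p, p \in l -> comp p.1 p.2) ->
          \sum_(p <- l) p.2 = 0 -> forall p, p \in l -> p.2 = 0)
  (l : seq (S * R)) :
  (forall p, p \in l -> comp p.1 p.2) -> \sum_(p <- l) p.2 = 0 ->
  forall s, \sum_(p <- l | p.1 == s) p.2 = 0.
Proof.
move=> Hc H0 s.
set U := undup (map fst l).
set G := [seq (t, \sum_(p <- l | p.1 == t) p.2) | t <- U].
have HG : map fst G = U.
  rewrite /G; elim: (U) => //= t U' ->; done.
have Gc : forall p, p \in G -> comp p.1 p.2.
  move=> p /mapP[t _ ->] /=; apply: comp_sum => // i il /eqP <-; exact: Hc.
have GS : \sum_(p <- G) p.2 = 0.
  rewrite big_map /=.
  under eq_bigr do rewrite big_mkcond.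
  rewrite exchange_big /=; rewrite -[RHS]H0; apply: eq_big_seq => p pl.
  rewrite -big_mkcond /=.
  under eq_bigl do rewrite eq_sym.
  rewrite -big_filter filter_pred1_uniq ?undup_uniq ?mem_undup ?map_f //.
  by rewrite big_seq1.
case: (boolP (s \in U)) => sU.
- apply: (Hdir G _ Gc GS (s, \sum_(p <- l | p.1 == s) p.2)).
    by rewrite HG undup_uniq.
  by apply/mapP; exists s.
- rewrite big_seq_cond big1 // => p /andP[pl /eqP ps].
  by move: sU; rewrite mem_undup -ps map_f.
Qed.

Theorem corollary4p12 (R : zmodType) (mul : R -> R -> R)
    (S : eqType) (op : S -> S -> S) (z : S) (comp : S -> R -> Prop) :
  graded_inducing mul op z comp ->
  eps_strongly_graded mul op z comp ->
  (graded_vNr mul comp <->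
   forall e : S, idem op e -> vNr_subring mul (comp e)).
Proof.
move=> [[Hring Hsub] Hdec Hdir [Hz Hnz] [Hzop Hmul]] [Hcanc Hlri [eps Heps]].
have Hring' := Hring.
case: Hring' => Hassoc [Hld Hrd].
have He_ : forall e, idem op e -> op e e = e by [].
split.
- move=> Hv e He x xe.
  case: (eqVneq e z) => [ez | enz].
    subst e; rewrite (Hz x xe); exists 0; split; first exact: (Hsub z).1.
    by rewrite !mul0l'.
  have [y Hy] := Hv e x xe.
  have [ly [_ [lyc ydef]]] := Hdec y.
  exists (\sum_(p <- ly | p.1 == e) p.2); split.
    by apply: comp_sum => // p pl /eqP <-; exact: lyc.
  have Hy' : x = \sum_(p <- ly) mul (mul x p.2) x.
    by rewrite {1}Hy ydef mul_sumr' // mul_suml'.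
  have Hcond : forall t, (op (op e t) e == e) = (t == e).
    move=> t; apply/eqP/eqP => [h|->]; last by rewrite !(He : op e e = e).
    have h1 : op e t = e.
      apply: ((Hcanc (op e t) e e).1); first by rewrite h; apply/eqP.
      by rewrite h He.
    apply: ((Hcanc t e e).2); first by rewrite h1; apply/eqP.
    by rewrite h1 He.
  set L := (e, -x) :: [seq (op (op e p.1) e, mul (mul x p.2) x) | p <- ly].
  have HLc : forall p, p \in L -> comp p.1 p.2.
    move=> p; rewrite inE => /orP[/eqP -> /=|/mapP[q ql ->] /=].
      exact: (Hsub e).2.2.
    apply: (Hmul) => //; apply: (Hmul) => //; exact: lyc.
  have HLs : \sum_(p <- L) p.2 = 0.
    by rewrite /L big_cons big_map /= -Hy' addNr.
  have := @gen_direct _ _ _ Hsub Hdir L HLc HLs e.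
  rewrite /L big_cons eqxx big_map /=.
  under eq_bigl do rewrite Hcond.
  rewrite -mul_suml' // -mul_sumr' //.
  move=> H; symmetry; apply/eqP; rewrite -subr_eq0 addrC; exact/eqP.
- move=> Hv s x xs.
  have [s' Hss'] := Hlri s.
  have Hss'2 := Hss'.
  case: Hss'2 => [e [f [He Hf Hes Hsf [Hfs' Hs'e Hss'e Hs's]]]].
  have Hs's2 : lri_inv op s' s.
    by exists f, e; split.
  have [_ Hepsx] := Heps s s' Hss'.
  have [[l [lc leq]] _] := Heps s' s Hs's2.
  have key : forall L : seq (R * R), (forall p, p \in L -> comp s' p.1) ->
      exists b, comp s' b /\
        forall p, p \in L -> mul (mul x b) (mul x p.1) = mul x p.1.
    elim => [|c L IH] HL.
      by exists 0; split => //; exact: (Hsub s').1.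
    have [b [bs' Hb]] : exists b, comp s' b /\
        forall p, p \in L -> mul (mul x b) (mul x p.1) = mul x p.1.
      by apply: IH => p pL; apply: HL; rewrite inE pL orbT.
    have c1s : comp s' c.1 by apply: HL; rewrite inE eqxx.
    set a := mul x c.1.
    set a' := a - mul (mul x b) a.
    have ae : comp e a by rewrite -Hss'e; exact: Hmul.
    have a'e : comp e a'.
      apply: (Hsub e).2.1 => //; apply: (Hsub e).2.2.
      rewrite -He; apply: (Hmul) => //; rewrite -Hss'e; exact: Hmul.
    have [u [ue Hu]] := Hv e He a' a'e.
    set k := c.1 - mul (mul b x) c.1.
    have ks : comp s' k.
      apply: (Hsub s').2.1 => //; apply: (Hsub s').2.2.
      rewrite -Hfs' -Hs's; apply: (Hmul) => //; exact: Hmul.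
    have Hxk : mul x k = a'.
      by rewrite /k mulBr' // /a' /a !Hassoc.
    set h := mul a' u.
    set b' := b + mul k u - mul (mul (mul k u) x) b.
    have Hxb' : mul x b' = mul x b + h - mul h (mul x b).
      rewrite /b' mulBr' // Hrd /h -Hxk !Hassoc //.
    have Hsm : forall v w, comp s' v -> comp s' w -> comp s' (v - w).
      move=> v w hv hw; apply: (Hsub s').2.1 => //; exact: (Hsub s').2.2.
    have kus : comp s' (mul k u) by rewrite -Hs'e; apply: (Hmul).
    have kux : comp f (mul (mul k u) x) by rewrite -Hs's; apply: (Hmul).
    exists b'; split.
      apply: Hsm; first by apply: (Hsub s').2.1.
      by rewrite -Hfs'; apply: (Hmul).
    move=> p; rewrite inE => /orP[/eqP ->|pL].
      rewrite Hxb' mulBl' // Hld -/a -(Hassoc h) -addrA -mulBr' // -/a' /h -Hu.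
      by rewrite /a' addrC subrK.
    rewrite Hxb' mulBl' // Hld -(Hassoc h) (Hb p pL).
    by rewrite addrK.
  have [b [bs' Hb]] := key l (fun p pl => (lc p pl).1).
  exists b.
  have Hxe : x = mul x (eps s') by rewrite ((Hepsx x xs).2).
  rewrite {1 3}Hxe leq mul_sumr' // mul_sumr' //; apply: eq_big_seq => p pl.
  rewrite !Hassoc -{1}(Hb p pl) !Hassoc //.
Qed.
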